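(* Let $\Sigma$ be a smooth surface in $\mathbb{R}^3$ and let $\Gamma$ be a line of curvature on $\Sigma$ whose geodesic curvature on $\Sigma$ is a constant $c\neq 0$. Suppose that the principal curvature of $\Sigma$ along $\Gamma$ (i.e. the normal curvature of $\Sigma$ in the direction tangent to $\Gamma$) does not vanish at any point of $\Gamma$, and that $\Gamma$, regarded as a space curve in $\mathbb{R}^3$, has nowhere vanishing torsion. Then there exists a sphere of radius $\frac{1}{|c|}$ which intersects $\Sigma$ orthogonally along $\Gamma$.
   Context: A line of curvature on $\Sigma$ is a curve whose tangent vector is at every point a principal direction of $\Sigma$. *)

(* Defs.v *)
From HB Require Import structures.
From mathcomp Require Import all_boot all_order all_algebra.
From mathcomp Require Import all_classical all_reals all_analysis.
Set Implicit Arguments. Unset Strict Implicit. Unset Printing Implicit Defensive.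
Import Order.TTheory GRing.Theory Num.Theory.
Import numFieldNormedType.Exports.
Local Open Scope ring_scope.
Local Open Scope classical_set_scope.

Section DiffGeo.
Variable R : realType.

Definition dot3 (u v : 'rV[R]_3) : R := \sum_(i < 3) u 0 i * v 0 i.
Definition enorm3 (u : 'rV[R]_3) : R := Num.sqrt (dot3 u u).
Definition cross3 (u v : 'rV[R]_3) : 'rV[R]_3 :=
  \row_(i < 3) (u 0 (i + 1) * v 0 (i + 1 + 1) - u 0 (i + 1 + 1) * v 0 (i + 1)).
Definition det3 (u v w : 'rV[R]_3) : R := dot3 u (cross3 v w).

Fixpoint iterD (V W : normedModType R) (vs : seq V) (f : V -> W) : V -> W :=
  match vs with
  | [::] => f
  | v :: vs' => fun x => derive (iterD vs' f) x v
  end.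

(* C^infinity on a set (meant for open sets): every iterated directional
   derivative exists and is differentiable at each point of U *)
Definition smooth_on (V W : normedModType R) (U : set V) (f : V -> W) : Prop :=
  forall (vs : seq V) (x : V), U x -> differentiable (iterD vs f) x.

Definition e1 : 'rV[R]_2 := \row_(j < 2) (if j == 0 then 1 else 0).
Definition e2 : 'rV[R]_2 := \row_(j < 2) (if j == 0 then 0 else 1).

Definition regular_surface (U : set 'rV[R]_2) (X : 'rV[R]_2 -> 'rV[R]_3) : Prop :=
  open U /\ smooth_on U X /\
  forall x, U x -> cross3 (derive X x e1) (derive X x e2) != 0.

Definition unit_normal (X : 'rV[R]_2 -> 'rV[R]_3) (x : 'rV[R]_2) : 'rV[R]_3 :=
  let n := cross3 (derive X x e1) (derive X x e2) in (enorm3 n)^-1 *: n.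

Definition principal_direction (X : 'rV[R]_2 -> 'rV[R]_3) (x w : 'rV[R]_2) : Prop :=
  derive X x w != 0 /\
  exists k : R, - derive (unit_normal X) x w = k *: derive X x w.

(* normal curvature of the surface at X x in the direction dX_x(w):
   II(w,w)/I(w,w) = - <dN(w), dX(w)> / <dX(w), dX(w)> *)
Definition normal_curvature (X : 'rV[R]_2 -> 'rV[R]_3) (x w : 'rV[R]_2) : R :=
  - dot3 (derive (unit_normal X) x w) (derive X x w)
    / dot3 (derive X x w) (derive X x w).

Definition dern (V : normedModType R) (n : nat) (f : R -> V) : R -> V :=
  derive1n n f.

Definition geodesic_curvature (X : 'rV[R]_2 -> 'rV[R]_3) (alpha : R -> 'rV[R]_2)
  (t : R) : R :=
  let G := X \o alpha in
  dot3 (dern 2 G t) (cross3 (unit_normal X (alpha t)) (dern 1 G t))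
    / (enorm3 (dern 1 G t)) ^+ 3.

Definition torsion (G : R -> 'rV[R]_3) (t : R) : R :=
  det3 (dern 1 G t) (dern 2 G t) (dern 3 G t)
    / (enorm3 (cross3 (dern 1 G t) (dern 2 G t))) ^+ 2.

Definition line_of_curvature (U : set 'rV[R]_2) (X : 'rV[R]_2 -> 'rV[R]_3)
  (I : set R) (alpha : R -> 'rV[R]_2) : Prop :=
  open I /\ is_interval I /\ I !=set0 /\ smooth_on I alpha /\
  (forall t, I t -> U (alpha t)) /\
  (forall t, I t -> principal_direction X (alpha t) (dern 1 alpha t)).

End DiffGeo.

(* Main.v *)
Require Import Defs.
From HB Require Import structures.
From mathcomp Require Import all_boot all_order all_algebra.
From mathcomp Require Import all_classical all_reals all_analysis.
From mathcomp Require Import ring lra.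
Import Order.TTheory GRing.Theory Num.Theory.
Import numFieldNormedType.Exports.
Set Implicit Arguments. Unset Strict Implicit.
Local Open Scope ring_scope.
Local Open Scope classical_set_scope.

Section Helpers.
Variable R : realType.

Lemma dot3E (u v : 'rV[R]_3) :
  dot3 u v = u 0 0 * v 0 0 + u 0 1 * v 0 1 + u 0 2%:R * v 0 2%:R.
Proof. rewrite /dot3 !big_ord_recr big_ord0 /= add0r.
congr (_ * _ + _ * _ + _ * _); congr (_ _ _); exact/val_inj. Qed.

Lemma cross3E (u v : 'rV[R]_3) : cross3 u v = \row_(i < 3)
  [:: u 0 1 * v 0 2%:R - u 0 2%:R * v 0 1; u 0 2%:R * v 0 0 - u 0 0 * v 0 2%:R;
      u 0 0 * v 0 1 - u 0 1 * v 0 0]`_i.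
Proof. apply/rowP => i; rewrite !mxE. case: i => [[|[|[|//]]] Hi] /=.
all: congr (_ * _ - _ * _); congr (_ _ _); apply/val_inj => //=.
Qed.

Lemma row3P (u v : 'rV[R]_3) : u 0 0 = v 0 0 -> u 0 1 = v 0 1 -> u 0 2%:R = v 0 2%:R -> u = v.
Proof.
move=> h0 h1 h2; apply/rowP => i.
case: i => [[|[|[|//]]] Hi].
- by rewrite (_ : Ordinal Hi = 0) //; apply/val_inj.
- by rewrite (_ : Ordinal Hi = 1) //; apply/val_inj.
- by rewrite (_ : Ordinal Hi = 2%:R) //; apply/val_inj.
Qed.

Ltac comp := rewrite ?dot3E ?cross3E ?mxE /=.

Lemma cross3_scal_same (a b : R) (u : 'rV[R]_3) : cross3 (a *: u) (b *: u) = 0.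
Proof. by apply: row3P; comp; rewrite ?mxE; ring. Qed.

Lemma cross3_linr (n u v : 'rV[R]_3) (a b : R) :
  cross3 n (a *: u + b *: v) = a *: cross3 n u + b *: cross3 n v.
Proof. by apply: row3P; comp; rewrite ?mxE /=; ring. Qed.

Lemma dot_cross_tan (m u v : 'rV[R]_3) (l a b : R) :
  dot3 (l *: cross3 u v) (a *: u + b *: v) = 0.
Proof. by comp; rewrite ?mxE /=; ring. Qed.

Lemma dot_cross_self (n u : 'rV[R]_3) : dot3 n (cross3 n u) = 0.
Proof. by comp; ring. Qed.

Lemma dot3C (u v : 'rV[R]_3) : dot3 u v = dot3 v u.
Proof. by comp; ring. Qed.

Lemma dot3Z (a b : R) (u v : 'rV[R]_3) : dot3 (a *: u) (b *: v) = a * b * dot3 u v.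
Proof. by comp; rewrite ?mxE; ring. Qed.

Lemma lagrange3 (u v : 'rV[R]_3) :
  dot3 (cross3 u v) (cross3 u v) = dot3 u u * dot3 v v - (dot3 u v) ^+ 2.
Proof. by comp; ring. Qed.

Lemma key_gen (n g h : 'rV[R]_3) :
  (dot3 n n * dot3 g g - dot3 n g ^+ 2) *: cross3 n h =
  (dot3 n n * dot3 h g - dot3 n g * dot3 h n) *: cross3 n g +
  dot3 h (cross3 n g) *: (dot3 n g *: n - dot3 n n *: g).
Proof. by apply: row3P; comp; rewrite ?mxE /=; ring. Qed.

Lemma dot3_ge0 (u : 'rV[R]_3) : 0 <= dot3 u u.
Proof. by rewrite dot3E -!expr2 !addr_ge0 // sqr_ge0. Qed.

Lemma dot3_gt0 (u : 'rV[R]_3) : u != 0 -> 0 < dot3 u u.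
Proof.
move=> un0; rewrite lt_neqAle dot3_ge0 andbT eq_sym; apply: contra un0.
rewrite dot3E -!expr2 paddr_eq0 ?addr_ge0 ?sqr_ge0 // paddr_eq0 ?sqr_ge0 //.
rewrite !sqrf_eq0 => /andP[/andP[/eqP a /eqP b] /eqP c].
by apply/eqP/row3P; rewrite ?a ?b ?c !mxE.
Qed.


Section Der.
Context {V : normedModType R}.

Lemma is_derive_coord n (f : V -> 'rV[R]_n) t v (w : 'rV[R]_n) i :
  is_derive t v f w -> is_derive t v (fun s => f s 0 i) (w 0 i).
Proof.
case=> df <-; have := (derivable_mxP f t v).1 df 0 i => dfi.
apply: DeriveDef => //.
by rewrite derive_mx // mxE.
Qed.

Arguments is_derive_coord {n f t v w} i _.

Lemma is_derive_row n (f : V -> 'rV[R]_n) t v (w : 'rV[R]_n) :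
  (forall i, is_derive t v (fun s => f s 0 i) (w 0 i)) -> is_derive t v f w.
Proof.
move=> H.
have df : derivable f t v.
  apply/derivable_mxP => i j; rewrite (ord1 i); exact: (@ex_derive _ _ _ _ _ _ _ (H j)).
apply: DeriveDef => //.
rewrite derive_mx //; apply/matrixP => i j; rewrite mxE (ord1 i).
exact: derive_val.
Qed.

Lemma is_derive_mulf (f g : V -> R) t v (a b : R) :
  is_derive t v f a -> is_derive t v g b ->
  is_derive t v (fun s => f s * g s) (f t * b + g t * a).
Proof. move=> Ha Hb; exact: (is_deriveM Ha Hb). Qed.

Arguments is_derive_mulf {f g t v a b} _ _.

Lemma is_derive_addf (f g : V -> R) t v (a b : R) :
  is_derive t v f a -> is_derive t v g b ->
  is_derive t v (fun s => f s + g s) (a + b).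
Proof. move=> Ha Hb; exact: (is_deriveD Ha Hb). Qed.

Lemma is_derive_subf (f g : V -> R) t v (a b : R) :
  is_derive t v f a -> is_derive t v g b ->
  is_derive t v (fun s => f s - g s) (a - b).
Proof. move=> Ha Hb; exact: (is_deriveB Ha Hb). Qed.

Arguments is_derive_subf {f g t v a b} _ _.
Arguments is_derive_addf {f g t v a b} _ _.

Lemma is_derive_dot (f g : V -> 'rV[R]_3) t v (a b : 'rV[R]_3) :
  is_derive t v f a -> is_derive t v g b ->
  is_derive t v (fun s => dot3 (f s) (g s)) (dot3 a (g t) + dot3 (f t) b).
Proof.
move=> Ha Hb.
have E : (fun s => dot3 (f s) (g s)) = (fun s => f s 0 0 * g s 0 0 + f s 0 1 * g s 0 1 + f s 0 2%:R * g s 0 2%:R).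
  by apply: funext => s; rewrite dot3E.
rewrite E; apply: is_derive_eq.
  apply: is_derive_addf; first apply: is_derive_addf.
  1-3: apply: is_derive_mulf; apply: is_derive_coord; eassumption.
by rewrite !dot3E; ring.
Qed.

Lemma is_derive_cross (f g : V -> 'rV[R]_3) t v (a b : 'rV[R]_3) :
  is_derive t v f a -> is_derive t v g b ->
  is_derive t v (fun s => cross3 (f s) (g s)) (cross3 a (g t) + cross3 (f t) b).
Proof.
move=> Ha Hb; apply: is_derive_row => i.
have D (k l : 'I_3) : is_derive t v (fun s => f s 0 k * g s 0 l - f s 0 l * g s 0 k)
   (f t 0 k * b 0 l + g t 0 l * a 0 k - (f t 0 l * b 0 k + g t 0 k * a 0 l)).
  exact: (is_derive_subf (is_derive_mulf (is_derive_coord k Ha) (is_derive_coord l Hb))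
     (is_derive_mulf (is_derive_coord l Ha) (is_derive_coord k Hb))).
have E : (fun s => cross3 (f s) (g s) 0 i) = (fun s => (\row_(i < 3)
  [:: f s 0 1 * g s 0 2%:R - f s 0 2%:R * g s 0 1; f s 0 2%:R * g s 0 0 - f s 0 0 * g s 0 2%:R;
      f s 0 0 * g s 0 1 - f s 0 1 * g s 0 0]`_i) 0 i).
  by apply: funext => s; rewrite cross3E.
rewrite E {E}.
case: i => [[|[|[|//]]] Hi]; under eq_fun do rewrite mxE /=; apply: is_derive_eq.
all: by rewrite [RHS]mxE !cross3E !mxE /=; ring.
Qed.

Lemma is_derive_scal (k : V -> R) (f : V -> 'rV[R]_3) t v (a : R) (w : 'rV[R]_3) :
  is_derive t v k a -> is_derive t v f w ->
  is_derive t v (fun s => k s *: f s) (a *: f t + k t *: w).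
Proof.
move=> Ha Hw; apply: is_derive_row => i.
have E : (fun s => (k s *: f s) 0 i) = (fun s => k s * f s 0 i).
  by apply: funext => s; rewrite mxE.
rewrite E; apply: is_derive_eq.
  apply: is_derive_mulf => //; apply: is_derive_coord; eassumption.
by rewrite !mxE; ring.
Qed.

Lemma is_derive_inv (k : V -> R) t v (a : R) :
  k t != 0 -> is_derive t v k a ->
  is_derive t v (fun s => (k s)^-1) (- (k t) ^- 2 * a).
Proof.
move=> k0 [dk <-]; apply: DeriveDef; first exact: derivableV.
by rewrite deriveV.
Qed.

Lemma diff_coord n (f : V -> 'rV[R]_n) x i :
  differentiable f x -> differentiable (fun y => f y 0 i) x.
Proof.
move=> df; exact: (differentiable_comp df (differentiable_coord (f x) 0 i)).
Qed.

Lemma diff_row n (f : V -> 'rV[R]_n) x :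
  (forall i, differentiable (fun y => f y 0 i) x) -> differentiable f x.
Proof.
move=> H.
have -> : f = \sum_(j < n) (fun y => f y 0 j *: 'e_j).
  apply: funext => y; rewrite [LHS]row_sum_delta.
  by rewrite fct_sumE.
apply: differentiable_sum => j; exact: differentiableZl.
Qed.


Lemma diff_dot (f g : V -> 'rV[R]_3) x :
  differentiable f x -> differentiable g x -> differentiable (fun y => dot3 (f y) (g y)) x.
Proof.
move=> df dg.
have -> : (fun y => dot3 (f y) (g y)) = (fun s => f s 0 0 * g s 0 0 + f s 0 1 * g s 0 1 + f s 0 2%:R * g s 0 2%:R).
  by apply: funext => s; rewrite dot3E.
by apply: differentiableD; first apply: differentiableD; apply: differentiableM; apply: diff_coord.
Qed.

Lemma diff_cross (f g : V -> 'rV[R]_3) x :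
  differentiable f x -> differentiable g x -> differentiable (fun y => cross3 (f y) (g y)) x.
Proof.
move=> df dg; apply: diff_row => i.
have D (k l : 'I_3) : differentiable (fun s => f s 0 k * g s 0 l - f s 0 l * g s 0 k) x.
  by apply: differentiableB; apply: differentiableM; apply: diff_coord.
have E : (fun s => cross3 (f s) (g s) 0 i) = (fun s => (\row_(i < 3)
  [:: f s 0 1 * g s 0 2%:R - f s 0 2%:R * g s 0 1; f s 0 2%:R * g s 0 0 - f s 0 0 * g s 0 2%:R;
      f s 0 0 * g s 0 1 - f s 0 1 * g s 0 0]`_i) 0 i).
  by apply: funext => s; rewrite cross3E.
rewrite E {E}.
by case: i => [[|[|[|//]]] Hi]; under eq_fun do rewrite mxE /=.
Qed.

Lemma diff_scal (k : V -> R) (f : V -> 'rV[R]_3) x :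
  differentiable k x -> differentiable f x -> differentiable (fun y => k y *: f y) x.
Proof.
move=> dk df; apply: diff_row => i.
have -> : (fun y => (k y *: f y) 0 i) = (fun y => k y * f y 0 i).
  by apply: funext => s; rewrite mxE.
by apply: differentiableM => //; apply: diff_coord.
Qed.

Lemma diff_sqrt (h : V -> R) x : differentiable h x -> 0 < h x ->
  differentiable (fun y => Num.sqrt (h y)) x.
Proof.
move=> dh hpos.
apply: (differentiable_comp dh).
apply/derivable1_diffP.
exact: (@ex_derive _ _ _ _ _ _ _ (is_derive1_sqrt hpos)).
Qed.

End Der.

Lemma chain_curve (W : normedModType R) (F : 'rV[R]_2 -> W) (a : R -> 'rV[R]_2) t :
  differentiable a t -> differentiable F (a t) ->
  is_derive t 1 (F \o a) (derive F (a t) (derive a t 1)).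
Proof.
move=> da dF; apply: DeriveDef.
  exact/diff_derivable/differentiable_comp.
rewrite deriveE; last exact: differentiable_comp.
by rewrite diff_comp // !deriveE.
Qed.

Lemma derive_lin2 (W : normedModType R) (F : 'rV[R]_2 -> W) x (w : 'rV[R]_2) :
  differentiable F x ->
  derive F x w = w 0 0 *: derive F x (e1 R) + w 0 1 *: derive F x (e2 R).
Proof.
move=> dF; rewrite !deriveE //.
have Ew : w = w 0 0 *: e1 R + w 0 1 *: e2 R.
  apply/rowP => i; rewrite !mxE.
  by case: i => [[|[|//]] Hi]; rewrite /= mulr1 mulr0 ?addr0 ?add0r; congr (w 0 _); apply/val_inj.
by rewrite {1}Ew linearD !linearZ.
Qed.


Lemma dot3Zr (a : R) (u v : 'rV[R]_3) : dot3 u (a *: v) = a * dot3 u v.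
Proof. by comp; rewrite ?mxE; ring. Qed.

Lemma dot3Zl (a : R) (u v : 'rV[R]_3) : dot3 (a *: u) v = a * dot3 u v.
Proof. by comp; rewrite ?mxE; ring. Qed.

Lemma const_on_interval (I : set R) (f : R -> R) : is_interval I ->
  (forall s, I s -> is_derive s 1 f 0) -> forall x y, I x -> I y -> f x = f y.
Proof.
move=> Iint Hd.
suff H : forall x y, x <= y -> I x -> I y -> f x = f y.
  move=> x y Ix Iy; case: (leP x y) => xy; first exact: H.
  by apply/esym/H => //; exact: ltW.
move=> x y xy Ix Iy.
have inI z : x <= z <= y -> I z by move=> hz; exact: (Iint x y Ix Iy z hz).
have [|| z _ E] := @MVT_segment R f (fun=> 0) x y xy.
- move=> z; rewrite in_itv /= => /andP[h1 h2]; apply: Hd; apply: inI.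
  by rewrite !ltW.
- apply: continuous_in_subspaceT => z; rewrite inE /= in_itv /= => hz.
  apply: differentiable_continuous; apply/derivable1_diffP.
  exact: (@ex_derive _ _ _ _ _ _ _ (Hd z (inI z hz))).
- by apply/eqP; rewrite eq_sym -subr_eq0 E mul0r.
Qed.

Lemma alg (L w s Ai gi Bi : R) : L != 0 -> w != 0 -> L ^+ 2 * Bi = s * Ai - w * gi ->
  gi + (w / L ^+ 3)^-1 * ((- L ^- 2 * ((2 * L)^-1 * (s + s))) * Ai + L^-1 * Bi) = 0.
Proof.
move=> L0 w0 HB.
have -> : Bi = (s * Ai - w * gi) / L ^+ 2 by rewrite -HB; field.
by field; rewrite L0 w0.
Qed.

Lemma final_alg (Lv w s : R) (A g : 'rV[R]_3) : Lv != 0 -> w != 0 ->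
  g + (w / Lv ^+ 3)^-1 *: ((- Lv ^- 2 * ((2 * Lv)^-1 * (s + s))) *: A +
   Lv^-1 *: (Lv ^- 2 *: (s *: A + w *: - g))) = 0.
Proof.
move=> L0 w0; apply/rowP => i; rewrite !mxE.
field; by rewrite L0 w0.
Qed.

Lemma normal_facts (U : set 'rV[R]_2) (X : 'rV[R]_2 -> 'rV[R]_3) x :
  regular_surface U X -> U x ->
  [/\ differentiable (unit_normal X) x,
      dot3 (unit_normal X x) (unit_normal X x) = 1 &
      forall w, dot3 (unit_normal X x) (derive X x w) = 0].
Proof.
move=> [Uo [Hs Hc]] Ux.
have dX : differentiable X x := Hs [::] x Ux.
have dX1 : differentiable (fun y => derive X y (e1 R)) x := Hs [:: e1 R] x Ux.
have dX2 : differentiable (fun y => derive X y (e2 R)) x := Hs [:: e2 R] x Ux.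
have m0 := Hc x Ux.
have mpos := dot3_gt0 m0.
have Lpos : 0 < Num.sqrt (dot3 (cross3 (derive X x (e1 R)) (derive X x (e2 R)))
   (cross3 (derive X x (e1 R)) (derive X x (e2 R)))) by rewrite sqrtr_gt0.
split.
- rewrite /unit_normal; apply: diff_scal; last exact: diff_cross.
  apply: differentiableV; last by rewrite /enorm3 gt_eqF.
  apply: diff_sqrt => //; apply: diff_dot; exact: diff_cross.
- rewrite /unit_normal /= dot3Zl dot3Zr /enorm3.
  set q := dot3 _ _ in mpos Lpos *.
  have Hq : Num.sqrt q ^+ 2 = q by rewrite sqr_sqrtr // ltW.
  by rewrite -{3}Hq; field; rewrite gt_eqF.
- move=> w; rewrite (derive_lin2 w dX) /unit_normal /=.
  exact: (dot_cross_tan 0).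
Qed.

End Helpers.

Theorem lemma3p1 (R : realType) (U : set 'rV[R]_2) (X : 'rV[R]_2 -> 'rV[R]_3)
  (I : set R) (alpha : R -> 'rV[R]_2) (c : R) :
  regular_surface U X ->
  line_of_curvature U X I alpha ->
  c != 0 ->
  (forall t, I t -> geodesic_curvature X alpha t = c) ->
  (forall t, I t -> normal_curvature X (alpha t) (dern 1 alpha t) != 0) ->
  (forall t, I t -> torsion (X \o alpha) t != 0) ->
  exists p : 'rV[R]_3, forall t, I t ->
    enorm3 ((X \o alpha) t - p) = `|c|^-1 /\
    dot3 (unit_normal X (alpha t)) ((X \o alpha) t - p) = 0.
Proof.
move=> Hreg [Io [Iint [[t0 It0] [Hsa [HU Hpd]]]]] c0 Hgc _ _.
have [Uo [HsX Hc]] := Hreg.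
set G := X \o alpha.
set N := unit_normal X.
set M := N \o alpha.
set g1 := derive1 G.
have da s : I s -> differentiable alpha s := fun Is => Hsa [::] s Is.
have da' s : I s -> differentiable (fun s => derive alpha s 1) s := fun Is => Hsa [:: 1] s Is.
have dX s : I s -> differentiable X (alpha s) := fun Is => HsX [::] _ (HU s Is).
have dX1 s : I s -> differentiable (fun y => derive X y (e1 R)) (alpha s) :=
  fun Is => HsX [:: e1 R] _ (HU s Is).
have dX2 s : I s -> differentiable (fun y => derive X y (e2 R)) (alpha s) :=
  fun Is => HsX [:: e2 R] _ (HU s Is).
have nf s : I s -> _ := fun Is => normal_facts Hreg (HU s Is).
have g1E s : I s -> g1 s = derive X (alpha s) (derive alpha s 1).
  by move=> Is; rewrite /g1 derive1E; exact: (@derive_val _ _ _ _ _ _ _ (chain_curve (da s Is) (dX s Is))).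
pose Gp s := (derive alpha s 1) 0 0 *: derive X (alpha s) (e1 R) +
             (derive alpha s 1) 0 1 *: derive X (alpha s) (e2 R).
have g1Gp s : I s -> g1 s = Gp s.
  by move=> Is; rewrite g1E // (derive_lin2 _ (dX s Is)).
have dGp s : I s -> differentiable Gp s.
  move=> Is; apply: differentiableD; apply: diff_scal.
  - exact: diff_coord (da' s Is).
  - exact: differentiable_comp (da s Is) (dX1 s Is).
  - exact: diff_coord (da' s Is).
  - exact: differentiable_comp (da s Is) (dX2 s Is).
have dg1 s : I s -> derivable g1 s 1.
  move=> Is; apply: (near_eq_derivable _ ((derivable1_diffP _ _).2 (dGp s Is))).
  have nI : \forall y \near s, I y := open_nbhs_nbhs (conj Io Is).
  by apply: filterS nI => y Iy; rewrite g1Gp.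
pose L s := Num.sqrt (dot3 (g1 s) (g1 s)).
pose T s := (L s)^-1 *: g1 s.
pose S s := cross3 (M s) (T s).
pose p s := G s + c^-1 *: S s.
have Hp t : I t -> is_derive t 1 p 0.
  move=> It.
  have [dN nn ng] := nf t It.
  have gE : g1 t = derive X (alpha t) (derive alpha t 1) := g1E t It.
  have HG : is_derive t 1 G (g1 t).
    by rewrite gE; exact: chain_curve (da t It) (dX t It).
  have Hg1 : is_derive t 1 g1 ('D_1 g1 t) := derivableP (dg1 t It).
  have HM : is_derive t 1 M (derive N (alpha t) (derive alpha t 1)) := chain_curve (da t It) dN.
  have [nz [k Hk]] := Hpd t It.
  rewrite /dern /= derive1E in nz Hk.
  have g0 : g1 t != 0 by rewrite gE.
  have qpos := dot3_gt0 g0.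
  have Hq := is_derive_dot Hg1 Hg1.
  have HL : is_derive t 1 L ((2 * Num.sqrt (dot3 (g1 t) (g1 t)))^-1 *
     (dot3 ('D_1 g1 t) (g1 t) + dot3 (g1 t) ('D_1 g1 t))) := is_derive1_comp (is_derive1_sqrt qpos) Hq.
  have Lpos : 0 < L t by rewrite /L sqrtr_gt0.
  have L0 : L t != 0 := lt0r_neq0 Lpos.
  have Hr := is_derive_inv L0 HL.
  have HT := is_derive_scal Hr Hg1.
  have HS := is_derive_cross HM HT.
  have H := is_deriveD HG (is_deriveZ c^-1 HS).
  apply: (is_derive_eq H).
  have Hg := Hgc t It.
  rewrite /geodesic_curvature /dern /= derive1E -/G -/g1 in Hg.
  have LE : enorm3 (g1 t) = L t by [].
  rewrite LE in Hg.
  have HN : 'D_('D_1 alpha t) N (alpha t) = (-k) *: g1 t.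
    by rewrite gE scaleNr -Hk opprK.
  rewrite HN cross3_scal_same add0r cross3_linr.
  have ng' : dot3 (M t) (g1 t) = 0 by rewrite gE; exact: ng.
  have K := key_gen (M t) (g1 t) ('D_1 g1 t).
  rewrite [dot3 (M t) (M t)]nn ng' expr0n /= mul1r subr0 mul0r subr0 scale0r sub0r !mul1r scale1r in K.
  have LL : L t ^+ 2 = dot3 (g1 t) (g1 t) := sqr_sqrtr (ltW qpos).
  rewrite -LL in K.
  have -> : Num.sqrt (dot3 (g1 t) (g1 t)) = L t by [].
  rewrite [dot3 (g1 t) ('D_1 g1 t)]dot3C -Hg.
  move: Hg K; set w := dot3 _ (cross3 _ _); set s := dot3 _ (g1 t).
  set A := cross3 (M t) (g1 t); set B := cross3 (M t) _.
  move=> Hg K.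
  have w0 : w != 0 by apply: contra c0 => /eqP w0; rewrite -Hg w0 mul0r.
  have -> : B = (L t ^+ 2)^-1 *: (s *: A + w *: - g1 t).
    by rewrite -K scalerA mulVf ?scale1r // expf_neq0.
  move: L0; move: (L t) => Lv L0.
  exact: final_alg.
have pc i x y : I x -> I y -> p x 0 i = p y 0 i.
  move=> Ix Iy; apply: (const_on_interval (f := fun s => p s 0 i) Iint) => // s Is.
  apply: is_derive_eq; first exact: (is_derive_coord i (Hp s Is)).
  by rewrite mxE.
exists (p t0) => t It.
have Ept : p t0 = p t by apply/rowP => i; exact: pc.
have [dN nn ng] := nf t It.
have gE : g1 t = derive X (alpha t) (derive alpha t 1) := g1E t It.
have [nz _] := Hpd t It.
rewrite /dern /= derive1E in nz.
have g0 : g1 t != 0 by rewrite gE.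
have qpos := dot3_gt0 g0.
have LL : L t ^+ 2 = dot3 (g1 t) (g1 t) := sqr_sqrtr (ltW qpos).
have Lpos : 0 < L t by rewrite /L sqrtr_gt0.
  have L0 : L t != 0 := lt0r_neq0 Lpos.
have ng' : dot3 (M t) (g1 t) = 0 by rewrite gE; exact: ng.
have -> : G t - p t0 = - (c^-1 *: S t).
  by rewrite Ept /p opprD addrA subrr add0r.
split.
- have TT : dot3 (T t) (T t) = 1.
    by rewrite /T dot3Zl dot3Zr -LL; field.
  have nT : dot3 (M t) (T t) = 0 by rewrite /T dot3Zr ng' mulr0.
  rewrite /enorm3 -scaleNr dot3Zl dot3Zr /S lagrange3 [dot3 (M t) (M t)]nn TT nT.
  by rewrite expr0n /= subr0 !mulr1 -expr2 sqrtr_sqr normrN normfV.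
- by rewrite -scaleNr dot3Zr /S dot_cross_self mulr0.
Qed.
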